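(* Let $(X,\mathcal U)$ be a non-archimedean uniform space and $\mathcal B$ a base of $\mathcal U$ consisting of equivalence relations. Realize $F_{NA}(X,\mathcal U)$ and $F^b_{NA}(X,\mathcal U)$ on the abstract free group $F(X)$ with $i(x)=x$. Then: (1) the family of subgroups $\{[V_\psi]:\psi\in\mathcal B^{F(X)}\}$ is a base of neighborhoods of the identity in $F_{NA}(X,\mathcal U)$; (2)(a) the family of normal subgroups $\{[\tilde\varepsilon]:\varepsilon\in\mathcal B\}$ is a base of neighborhoods of the identity in $F^b_{NA}(X,\mathcal U)$; (b) the topology of $F^b_{NA}(X,\mathcal U)$ is the weak topology generated by the homomorphisms $\overline{f_\varepsilon}\colon F(X)\to F(X/\varepsilon)$, $\varepsilon\in\mathcal B$, where each $F(X/\varepsilon)$ is discrete.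
   Context: A uniform space is non-archimedean if its uniformity has a base of equivalence relations. A topological group is non-archimedean if it has a local base at the identity of open subgroups, balanced if its left and right uniformities coincide. $F_{NA}(X,\mathcal U)$ (resp. $F^b_{NA}(X,\mathcal U)$) is the non-archimedean (resp. balanced non-archimedean) Hausdorff group with uniformly continuous $i\colon X\to G$ (two-sided uniformity) through which every uniformly continuous map into such a group factors uniquely by a continuous homomorphism; both are algebraically free on $i(X)$. In $F(X)$ let $j_2(\varepsilon)=\{x^{-1}y:(x,y)\in\varepsilon\}$, $j_2^*(\varepsilon)=\{xy^{-1}:(x,y)\in\varepsilon\}$; for $\psi\colon F(X)\to\mathcal B$ let $V_\psi=\bigcup_{w\in F(X)} w\big(j_2(\psi(w))\cup j_2^*(\psi(w))\big)w^{-1}$, and $\tilde\varepsilon=\bigcup_{w\in F(X)} w\big(j_2(\varepsilon)\cup j_2^*(\varepsilon)\big)w^{-1}$. For a symmetric set $A$, $[A]=\bigcup_n A^n$ is the subgroup it generates. $X/\varepsilon$ is the quotient set, $f_\varepsilon\colon X\to X/\varepsilon$ the quotient map, and $\overline{f_\varepsilon}\colon F(X)\to F(X/\varepsilon)$ its homomorphic extension. *)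

(* Defs.v *)
From HB Require Import structures.
From mathcomp Require Import all_boot.
From mathcomp Require Import boolp classical_sets topology.

Set Implicit Arguments.
Unset Strict Implicit.
Unset Printing Implicit Defensive.

Local Open Scope classical_set_scope.
Local Open Scope group_scope.

Definition equiv_rel (X : Type) (e : set (X * X)) : Prop :=
  [/\ forall x, e (x, x),
      forall x y, e (x, y) -> e (y, x)
    & forall x y z, e (x, y) -> e (y, z) -> e (x, z)].

Definition equiv_base (X : uniformType) (B : set (set (X * X))) : Prop :=
  [/\ forall e, B e -> entourage e,
      forall E, entourage E -> exists2 e, B e & e `<=` E
    & forall e, B e -> equiv_rel e].

Definition group_hom (G H : groupType) (f : G -> H) : Prop :=
  forall x y, f (x * y) = f x * f y.

Definition is_free_group (S : Type) (F : groupType) (i : S -> F) : Prop :=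
  forall (H : groupType) (f : S -> H),
    exists phi : F -> H,
      [/\ group_hom phi, forall s, phi (i s) = f s
        & forall psi : F -> H, group_hom psi -> (forall s, psi (i s) = f s) ->
            forall g, psi g = phi g].

Definition is_topology (T : Type) (tau : set (set T)) : Prop :=
  [/\ tau setT,
      forall A B, tau A -> tau B -> tau (A `&` B)
    & forall (I : Type) (A : I -> set T), (forall i, tau (A i)) ->
        tau (\bigcup_i A i)].

Definition nbhd_of (T : Type) (tau : set (set T)) (x : T) (U : set T) : Prop :=
  exists O, [/\ tau O, O x & O `<=` U].

Definition nbhd_base (T : Type) (tau : set (set T)) (x : T)
    (N : set (set T)) : Prop :=
  (forall V, N V -> nbhd_of tau x V) /\
  (forall U, nbhd_of tau x U -> exists2 V, N V & V `<=` U).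

Definition cont (T T' : Type) (tau : set (set T)) (tau' : set (set T'))
    (f : T -> T') : Prop :=
  forall O, tau' O -> tau (f @^-1` O).

Definition hausdorff (T : Type) (tau : set (set T)) : Prop :=
  forall x y, x <> y -> exists U V,
    [/\ tau U, tau V, U x, V y & U `&` V = set0].

Definition gen_topology (T : Type) (S : set (set T)) : set (set T) :=
  [set O | forall tau, is_topology tau -> S `<=` tau -> tau O].

Definition is_subgroup (G : groupType) (A : set G) : Prop :=
  [/\ A 1, forall x y, A x -> A y -> A (x * y) & forall x, A x -> A x^-1].

Definition top_group (G : groupType) (tau : set (set G)) : Prop :=
  [/\ is_topology tau,
      (forall O x y, tau O -> O (x * y) ->
         exists U V, [/\ tau U, tau V, U x, V y &
           forall u v, U u -> V v -> O (u * v)])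
    & cont tau tau (fun x : G => x^-1)].

Definition non_arch (G : groupType) (tau : set (set G)) : Prop :=
  nbhd_base tau 1 [set H | tau H /\ is_subgroup H].

Definition left_unif (G : groupType) (tau : set (set G)) : set (set (G * G)) :=
  [set E | exists2 U, nbhd_of tau 1 U &
     [set gh : G * G | U (gh.1^-1 * gh.2)] `<=` E].
Definition right_unif (G : groupType) (tau : set (set G)) : set (set (G * G)) :=
  [set E | exists2 U, nbhd_of tau 1 U &
     [set gh : G * G | U (gh.2 * gh.1^-1)] `<=` E].
Definition two_sided_unif (G : groupType) (tau : set (set G))
    : set (set (G * G)) :=
  [set E | exists2 U, nbhd_of tau 1 U &
     [set gh : G * G | U (gh.1^-1 * gh.2) /\ U (gh.2 * gh.1^-1)] `<=` E].

Definition balanced (G : groupType) (tau : set (set G)) : Prop :=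
  left_unif tau = right_unif tau.

Definition unif_cont_2 (X : uniformType) (G : groupType) (tau : set (set G))
    (f : X -> G) : Prop :=
  forall E, two_sided_unif tau E -> entourage [set xy : X * X | E (f xy.1, f xy.2)].

Definition is_free_NA (bal : bool) (X : uniformType) (F : groupType)
    (i : X -> F) (tau : set (set F)) : Prop :=
  [/\ top_group tau /\ hausdorff tau, non_arch tau, (bal -> balanced tau),
      unif_cont_2 tau i
    & forall (H : groupType) (sigma : set (set H)),
        top_group sigma -> hausdorff sigma -> non_arch sigma ->
        (bal -> balanced sigma) ->
        forall f : X -> H, unif_cont_2 sigma f ->
        exists phi : F -> H,
          [/\ group_hom phi, cont tau sigma phi, forall x, phi (i x) = f x
            & forall psi : F -> H, group_hom psi -> cont tau sigma psi ->
                (forall x, psi (i x) = f x) -> forall g, psi g = phi g]].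

Definition is_FNA := is_free_NA false.
Definition is_FNAb := is_free_NA true.

Section FreeSets.
Variables (X : Type) (F : groupType) (i : X -> F).

Definition j2 (e : set (X * X)) : set F :=
  [set g | exists x y, e (x, y) /\ g = (i x)^-1 * i y].
Definition j2s (e : set (X * X)) : set F :=
  [set g | exists x y, e (x, y) /\ g = i x * (i y)^-1].

Definition Vpsi (psi : F -> set (X * X)) : set F :=
  [set g | exists w v, (j2 (psi w) v \/ j2s (psi w) v) /\ g = w * v * w^-1].

Definition tilde (e : set (X * X)) : set F := Vpsi (fun _ => e).
End FreeSets.

Fixpoint setpow (G : groupType) (A : set G) (n : nat) : set G :=
  match n with
  | 0 => [set 1]
  | n.+1 => [set g | exists a b, [/\ A a, setpow A n b & g = a * b]]
  end.
Definition gen_subgroup (G : groupType) (A : set G) : set G :=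
  \bigcup_(n in [set: nat]) setpow A n.

Definition eclass (X : Type) (e : set (X * X)) (x : X) : set X :=
  [set y | e (x, y)].
Definition quot (X : Type) (e : set (X * X)) : Type :=
  {A : set X | exists x, A = eclass e x}.
Definition qmap (X : Type) (e : set (X * X)) (x : X) : quot e :=
  exist _ (eclass e x) (ex_intro _ x erefl).

(* Main.v *)
Require Import Defs.
From HB Require Import structures.
From mathcomp Require Import all_boot.
From mathcomp Require Import boolp classical_sets topology.
Local Open Scope classical_set_scope.
Local Open Scope group_scope.
Set Implicit Arguments.
Unset Strict Implicit.
Set Warnings "-redundant-canonical-projection".

Definition subg (F : groupType) (K : set F) (hK : is_subgroup K) := {w : F | K w}.
HB.instance Definition _ (F : groupType) (K : set F) (hK : is_subgroup K) :=
  gen_eqMixin (subg hK).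
HB.instance Definition _ (F : groupType) (K : set F) (hK : is_subgroup K) :=
  gen_choiceMixin (subg hK).
Section S.
Variables (F : groupType) (K : set F) (hK : is_subgroup K).
Definition sg_one : subg hK := exist _ 1 (let: And3 h _ _ := hK in h).
Definition sg_mul (a b : subg hK) : subg hK :=
  exist _ (proj1_sig a * proj1_sig b) (let: And3 _ h _ := hK in h _ _ (proj2_sig a) (proj2_sig b)).
Definition sg_inv (a : subg hK) : subg hK :=
  exist _ ((proj1_sig a)^-1) (let: And3 _ _ h := hK in h _ (proj2_sig a)).
Lemma sg_eq (a b : subg hK) : proj1_sig a = proj1_sig b -> a = b.
Proof. case: a b => [a ha] [b hb] /= eab; subst; congr exist; exact: Prop_irrelevance. Qed.
Lemma sg_mulA : associative sg_mul.
Proof. by move=> a b c; apply: sg_eq; rewrite /= mulgA. Qed.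
Lemma sg_mul1 : left_id sg_one sg_mul.
Proof. by move=> a; apply: sg_eq; rewrite /= mul1g. Qed.
Lemma sg_mulg1 : right_id sg_one sg_mul.
Proof. by move=> a; apply: sg_eq; rewrite /= mulg1. Qed.
Lemma sg_mulV : left_inverse sg_one sg_inv sg_mul.
Proof. by move=> a; apply: sg_eq; rewrite /= mulVg. Qed.
Lemma sg_mulgV : right_inverse sg_one sg_inv sg_mul.
Proof. by move=> a; apply: sg_eq; rewrite /= mulgV. Qed.
End S.
HB.instance Definition _ (F : groupType) (K : set F) (hK : is_subgroup K) :=
  isGroup.Build (subg hK) (@sg_mulA F K hK) (@sg_mul1 F K hK) (@sg_mulg1 F K hK) (@sg_mulV F K hK) (@sg_mulgV F K hK).

Lemma free_ind (X : Type) (F : groupType) (i : X -> F) (hF : is_free_group i)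
  (K : set F) (hK : is_subgroup K) (hX : forall x, K (i x)) : forall w, K w.
Proof.
have [phi [phm phi_i _]] := hF (subg hK) (fun x => exist _ (i x) (hX x)).
have [id0 [_ _ huniq]] := hF F i.
have e1 : forall w, proj1_sig (phi w) = id0 w.
  apply: (huniq (fun w => proj1_sig (phi w))) => [x y|x]; first by rewrite phm.
  by rewrite phi_i.
have e2 : forall w, w = id0 w by apply: (huniq id).
by move=> w; rewrite (e2 w) -e1; exact: proj2_sig.
Qed.

Section GroupLemmas.
Variable G : groupType.
Implicit Types (A H : set G).

Lemma genP A g : gen_subgroup A g <-> exists n, setpow A n g.
Proof.
split; first by case=> n _ h; exists n.
by case=> n h; exists n.
Qed.

Lemma setpow_add A m n a b : setpow A m a -> setpow A n b -> setpow A (m + n) (a * b).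
Proof.
elim: m a => [|m IH] a /=.
  by move=> -> hb; rewrite mul1g.
move=> [c [d [hc hd ->]]] hb; exists c, (d * b); split=> //.
  exact: IH.
by rewrite mulgA.
Qed.

Lemma gen_incl A a : A a -> gen_subgroup A a.
Proof. by move=> ha; apply/genP; exists 1%N; exists a, 1; split=> //; rewrite mulg1. Qed.

Lemma gen1 A : gen_subgroup A 1.
Proof. by apply/genP; exists 0%N. Qed.

Lemma genM A a b : gen_subgroup A a -> gen_subgroup A b -> gen_subgroup A (a * b).
Proof.
move=> /genP[m hm] /genP[n hn]; apply/genP; exists (m + n)%N; exact: setpow_add.
Qed.

Lemma gen_ind A (P : G -> Prop) : P 1 ->
  (forall a b, A a -> P b -> P (a * b)) -> forall g, gen_subgroup A g -> P g.
Proof.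
move=> P1 PM g /genP[n]; elim: n g => [|n IH] g /=; first by move=> ->.
by move=> [a [b [ha hb ->]]]; apply: PM => //; apply: IH.
Qed.

Lemma genV A : (forall a, A a -> A a^-1) -> forall g, gen_subgroup A g -> gen_subgroup A g^-1.
Proof.
move=> hA; apply: gen_ind; first by rewrite invg1; exact: gen1.
move=> a b ha hb; rewrite invgM; apply: genM => //; exact: gen_incl (hA _ ha).
Qed.

Lemma gen_is_subgroup A : (forall a, A a -> A a^-1) -> is_subgroup (gen_subgroup A).
Proof. move=> hA; split; [exact: gen1 | exact: genM | exact: genV]. Qed.

Lemma gen_sub A H : is_subgroup H -> A `<=` H -> gen_subgroup A `<=` H.
Proof.
case=> H1 HM _ AH; apply: gen_ind => // a b ha hb; exact: HM (AH _ ha) hb.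
Qed.

Lemma gen_mono A A' : A `<=` A' -> gen_subgroup A `<=` gen_subgroup A'.
Proof.
move=> AA'; apply: gen_ind; first exact: gen1.
by move=> a b ha hb; apply: genM => //; apply: gen_incl; apply: AA'.
Qed.

Lemma conjM (a u v : G) : a * (u * v) * a^-1 = (a * u * a^-1) * (a * v * a^-1).
Proof. by rewrite !mulgA mulgVK. Qed.

Lemma gen_conj A A' a : (forall u, A u -> A' (a * u * a^-1)) ->
  forall u, gen_subgroup A u -> gen_subgroup A' (a * u * a^-1).
Proof.
move=> hA; apply: gen_ind; first by rewrite mulg1 mulgV; exact: gen1.
move=> u v hu hv; rewrite conjM; apply: genM => //; apply: gen_incl; exact: hA.
Qed.

Lemma subgroup_I H1 H2 : is_subgroup H1 -> is_subgroup H2 -> is_subgroup (H1 `&` H2).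
Proof.
case=> a1 b1 c1 [a2 b2 c2]; split.
- by split.
- by move=> x y [? ?] [? ?]; split; [apply: b1 | apply: b2].
- by move=> x [? ?]; split; [apply: c1 | apply: c2].
Qed.

End GroupLemmas.

Lemma hom1 (G H : groupType) (f : G -> H) : group_hom f -> f 1 = 1.
Proof. move=> hf; apply: (@mulgI _ (f 1)); by rewrite -hf !mulg1. Qed.

Lemma homV (G H : groupType) (f : G -> H) : group_hom f -> forall x, f x^-1 = (f x)^-1.
Proof.
move=> hf x; apply: (@mulgI _ (f x)); by rewrite -hf !mulgV hom1.
Qed.

Section Topo.
Variable G : groupType.
Implicit Types (tau : set (set G)) (O U V : set G).

Lemma open_local (T : Type) (tau : set (set T)) (O : set T) : is_topology tau ->
  (forall g, O g -> exists W : set T, [/\ tau W, W g & W `<=` O]) -> tau O.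
Proof.
case=> _ _ hU hl.
pose I := {g | O g}.
have hV : forall s : I, {W : set T | [/\ tau W, W (proj1_sig s) & W `<=` O]}.
  by move=> s; apply: cid; apply: hl; exact: proj2_sig.
have -> : O = \bigcup_(s : I) proj1_sig (hV s).
  apply/seteqP; split.
    by move=> g Og; exists (exist _ g Og) => //; case: (proj2_sig (hV (exist _ g Og))).
  by move=> g [s _]; case: (proj2_sig (hV s)) => _ _; apply.
by apply: hU => s; case: (proj2_sig (hV s)).
Qed.

Lemma transl tau O a : top_group tau -> tau O -> tau [set u | O (a * u)].
Proof.
case=> htop hM _ hO; apply: open_local => // g Og.
have [U [V [_ hV Ua Vg hUV]]] := hM _ _ _ hO Og.
exists V; split=> // v Vv; exact: hUV.
Qed.

Lemma conj_nbhd tau U w : top_group tau -> nbhd_of tau 1 U ->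
  nbhd_of tau 1 [set u | U (w * u * w^-1)].
Proof.
move=> htg [O [hO O1 OU]]; case: (htg) => _ hM _.
have O1' : O ((w * 1) * w^-1) by rewrite mulg1 mulgV.
have [U1 [V1 [hU1 _ U1w V1w hUV1]]] := hM _ _ _ hO O1'.
have [U2 [V2 [_ hV2 U2w V21 hUV2]]] := hM _ _ _ hU1 U1w.
exists V2; split=> // g V2g; apply: OU; apply: hUV1 => //; exact: hUV2.
Qed.

Lemma open_nbhd tau O : tau O -> O 1 -> nbhd_of tau 1 O.
Proof. by move=> hO O1; exists O; split. Qed.

Lemma na_sub tau U : non_arch tau -> nbhd_of tau 1 U ->
  exists H, [/\ tau H, is_subgroup H & H `<=` U].
Proof. by rewrite /non_arch /nbhd_base => -[_ h] /h [H [h1 h2] h3]; exists H. Qed.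

Lemma subgroup_open1 (H : set G) : is_subgroup H -> H 1.
Proof. by case. Qed.

End Topo.

Section TopN.
Variables (G : groupType) (Nf : set (set G)).
Hypotheses (Nsub : forall N, Nf N -> is_subgroup N) (Nne : exists N, Nf N)
  (NI : forall N1 N2, Nf N1 -> Nf N2 -> exists2 N3, Nf N3 & N3 `<=` N1 `&` N2)
  (Nconj : forall N (a : G), Nf N -> exists2 N', Nf N' & forall u, N' u -> N (a^-1 * u * a)).

Definition topN := [set O : set G | forall g, O g -> exists2 N, Nf N & forall u, N u -> O (g * u)].

Lemma topN_top : is_topology topN.
Proof.
split.
- by move=> g _; case: Nne => N hN; exists N.
- move=> A B hA hB g [Ag Bg].
  have [N1 h1 h1'] := hA _ Ag; have [N2 h2 h2'] := hB _ Bg.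
  have [N3 h3 h3'] := NI h1 h2.
  by exists N3 => // u /h3' [? ?]; split; [apply: h1' | apply: h2'].
- move=> I A hA g [j _ Ajg]; have [N hN hN'] := hA j _ Ajg.
  by exists N => // u /hN' h; exists j.
Qed.

Lemma topN_N N : Nf N -> topN N.
Proof.
move=> hN g Ng; exists N => // u Nu; have [_ hM _] := Nsub hN; exact: hM.
Qed.

Lemma topN_coset N (x : G) : Nf N -> topN [set u | N (x^-1 * u)].
Proof.
move=> hN g Ng; exists N => // u Nu; have [_ hM _] := Nsub hN.
by rewrite /= mulgA; apply: hM.
Qed.

Lemma topN_group : top_group topN.
Proof.
split; first exact: topN_top.
- move=> O x y hO Oxy.
  have [N hN hN'] := hO _ Oxy.
  have [N' hN'f hN'c] := Nconj y hN.
  have [N3 h3 h3'] := NI hN hN'f.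
  exists [set u | N3 (x^-1 * u)], [set v | N3 (y^-1 * v)]; split.
  + exact: topN_coset.
  + exact: topN_coset.
  + by rewrite /= mulVg; case: (Nsub h3).
  + by rewrite /= mulVg; case: (Nsub h3).
  + move=> u v /= /h3' [_ hu] /h3' [hv _].
    have [_ hM _] := Nsub hN.
    have -> : u * v = x * y * ((y^-1 * (x^-1 * u) * y) * (y^-1 * v)).
      by rewrite !mulgA !mulgK mulgV mul1g.
    by apply: hN'; apply: hM => //; apply: hN'c.
- move=> O hO g Og.
  have [N hN hN'] := hO _ Og.
  have [N' hN'f hN'c] := Nconj g^-1 hN.
  exists N' => // u N'u /=.
  have [_ hM hV] := Nsub hN'f.
  have := hN'c _ (hV _ N'u); rewrite invgK => h.
  have -> : (g * u)^-1 = g^-1 * (g * u^-1 * g^-1) by rewrite invgM mulgA mulKg.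
  exact: hN'.
Qed.

Lemma topN_na : non_arch topN.
Proof.
split.
- move=> H [hH hS]; exists H; split=> //; by case: hS.
- move=> U [O [hO O1 OU]]; have [N hN hN'] := hO _ O1.
  exists N; first by split; [exact: topN_N | exact: Nsub].
  by move=> u Nu; apply: OU; have := hN' _ Nu; rewrite mul1g.
Qed.

Lemma topN_bal : (forall N, Nf N -> exists2 N', Nf N' & forall g u, N' u -> N (g^-1 * u * g)) ->
  balanced topN.
Proof.
move=> hU; rewrite /balanced; apply/seteqP; split => E [U [O [hO O1 OU]] hE].
- have [N hN hN'] := hO _ O1; have [N' hN'f hN'c] := hU _ hN.
  exists N'; first by exists N'; split; [exact: topN_N | case: (Nsub hN'f) | ].
  move=> [g h] /= hgh; apply: hE => /=; apply: OU; rewrite -[_ * _]mul1g; apply: hN'.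
  by have := hN'c g _ hgh; rewrite mulgA mulgVK.
- have [N hN hN'] := hO _ O1; have [N' hN'f hN'c] := hU _ hN.
  exists N'; first by exists N'; split; [exact: topN_N | case: (Nsub hN'f) | ].
  move=> [g h] /= hgh; apply: hE => /=; apply: OU; rewrite -[_ * _]mul1g; apply: hN'.
  by have := hN'c g^-1 _ hgh; rewrite invgK mulVKg.
Qed.

End TopN.

Lemma sig_eq (A : Type) (P : A -> Prop) (a b : {x | P x}) :
  proj1_sig a = proj1_sig b -> a = b.
Proof. case: a b => [a ha] [b hb] /= eab; subst; congr exist; exact: Prop_irrelevance. Qed.

Section Main.
Variables (X : uniformType) (B : set (set (X * X))) (hB : equiv_base B)
  (F : groupType) (i : X -> F) (hF : is_free_group i).

Lemma Bsym e x y : B e -> e (x, y) -> e (y, x).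
Proof. by case: hB => _ _ h /h [_ hs _]; apply: hs. Qed.

Lemma Brefl e x : B e -> e (x, x).
Proof. by case: hB => _ _ h /h [hr _ _]. Qed.

Lemma Bent e : B e -> entourage e.
Proof. by case: hB => h _ _; apply: h. Qed.

Lemma free_id (phi : F -> F) : group_hom phi -> (forall x, phi (i x) = i x) ->
  forall g, phi g = g.
Proof.
move=> hphi hi g; have [phi0 [_ _ hu]] := hF i.
have e2 : g = phi0 g by apply: (hu id).
by rewrite (hu phi hphi hi) -e2.
Qed.

Lemma Vpsi_sym psi : (forall w, B (psi w)) -> forall a, Vpsi i psi a -> Vpsi i psi a^-1.
Proof.
move=> hpsi a [w [v [hv ->]]]; exists w, v^-1; split; last by rewrite !invgM invgK mulgA.
case: hv => [[x [y [hxy ->]]]|[x [y [hxy ->]]]].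
- left; exists y, x; split; first exact: Bsym.
  by rewrite invgM invgK.
- right; exists y, x; split; first exact: Bsym.
  by rewrite invgM invgK.
Qed.

Lemma genV_sub psi : (forall w, B (psi w)) -> is_subgroup (gen_subgroup (Vpsi i psi)).
Proof. move=> h; apply: gen_is_subgroup; exact: Vpsi_sym. Qed.

Lemma Vpsi_conj psi psi' a : (forall w, psi' w `<=` psi (a * w)) ->
  forall u, gen_subgroup (Vpsi i psi') u -> gen_subgroup (Vpsi i psi) (a * u * a^-1).
Proof.
move=> hs; apply: gen_conj => u [w [v [hv ->]]].
exists (a * w), v; split; last by rewrite invgM !mulgA.
case: hv => [[x [y [hxy ->]]]|[x [y [hxy ->]]]].
- by left; exists x, y; split=> //; apply: hs.
- by right; exists x, y; split=> //; apply: hs.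
Qed.

Lemma Vpsi_mono psi psi' : (forall w, psi' w `<=` psi w) ->
  gen_subgroup (Vpsi i psi') `<=` gen_subgroup (Vpsi i psi).
Proof.
move=> hs; apply: gen_mono => u [w [v [hv ->]]]; exists w, v; split=> //.
case: hv => [[x [y [hxy ->]]]|[x [y [hxy ->]]]].
- by left; exists x, y; split=> //; apply: hs.
- by right; exists x, y; split=> //; apply: hs.
Qed.

Lemma Vpsi_j2 psi x y : psi 1 (x, y) -> Vpsi i psi ((i x)^-1 * i y).
Proof.
move=> h; exists 1, ((i x)^-1 * i y); split; last by rewrite invg1 mulg1 mul1g.
by left; exists x, y.
Qed.

Lemma Vpsi_j2s psi x y : psi 1 (x, y) -> Vpsi i psi (i x * (i y)^-1).
Proof.
move=> h; exists 1, (i x * (i y)^-1); split; last by rewrite invg1 mulg1 mul1g.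
by right; exists x, y.
Qed.

Section MainOpen.
Variables (bal : bool) (tau : set (set F)) (htau : is_free_NA bal i tau)
  (Pf : set (F -> set (X * X)))
  (P1 : forall psi, Pf psi -> forall w, B (psi w))
  (P2 : exists psi, Pf psi)
  (P3 : forall psi1 psi2, Pf psi1 -> Pf psi2 ->
     exists2 psi3, Pf psi3 & forall w, psi3 w `<=` psi1 w `&` psi2 w)
  (P4 : forall psi a, Pf psi -> exists2 psi', Pf psi' & forall w, psi' w `<=` psi (a * w))
  (P5 : bal -> forall psi, Pf psi -> forall a w, psi (a * w) = psi w).

Definition Nf := [set N : set F | exists H psi,
  [/\ tau H, is_subgroup H, Pf psi & N = H `&` gen_subgroup (Vpsi i psi)]].

Lemma tau_top : is_topology tau.
Proof. by case: htau => [[[h _ _] _] _ _ _ _]. Qed.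

Lemma tau_tg : top_group tau.
Proof. by case: htau => [[h _] _ _ _ _]. Qed.

Lemma tau_na : non_arch tau.
Proof. by case: htau. Qed.

Lemma Nsub N : Nf N -> is_subgroup N.
Proof.
case=> H [psi [_ hH hpsi ->]]; apply: subgroup_I => //; apply: genV_sub; exact: P1.
Qed.

Lemma setT_sub : is_subgroup (@setT F).
Proof. by []. Qed.

Lemma Nne : exists N, Nf N.
Proof.
case: P2 => psi hpsi; exists (setT `&` gen_subgroup (Vpsi i psi)), setT, psi; split=> //.
by case: tau_top.
Qed.

Lemma NI N1 N2 : Nf N1 -> Nf N2 -> exists2 N3, Nf N3 & N3 `<=` N1 `&` N2.
Proof.
case=> H1 [psi1 [tH1 sH1 p1 ->]] [H2 [psi2 [tH2 sH2 p2 ->]]].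
have [psi3 p3 h3] := P3 p1 p2.
exists (H1 `&` H2 `&` gen_subgroup (Vpsi i psi3)).
  exists (H1 `&` H2), psi3; split=> //; first by case: tau_top => _ hI _; apply: hI.
  exact: subgroup_I.
move=> u [[h1 h2] hg]; split; split=> //.
- by apply: (Vpsi_mono (psi' := psi3)) hg => w z /h3 [].
- by apply: (Vpsi_mono (psi' := psi3)) hg => w z /h3 [].
Qed.

Lemma Nconj N a : Nf N -> exists2 N', Nf N' & forall u, N' u -> N (a^-1 * u * a).
Proof.
case=> H [psi [tH sH p ->]].
have hn := conj_nbhd a^-1 tau_tg (open_nbhd tH (subgroup_open1 sH)).
have [H' [tH' sH' H'H]] := na_sub tau_na hn.
have [psi' p' hs] := P4 a^-1 p.
exists (H' `&` gen_subgroup (Vpsi i psi')); first by exists H', psi'; split.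
move=> u [h1 h2]; split; first by have := H'H _ h1; rewrite /= invgK.
by have := Vpsi_conj hs h2; rewrite invgK.
Qed.

Definition sigma := topN Nf.

Lemma tau_sub_sigma O : tau O -> sigma O.
Proof.
move=> hO g Og.
have ho := transl g tau_tg hO.
have o1 : [set u | O (g * u)] 1 by rewrite /= mulg1.
have [H [tH sH HO]] := na_sub tau_na (open_nbhd ho o1).
case: P2 => psi hpsi.
exists (H `&` gen_subgroup (Vpsi i psi)); first by exists H, psi; split.
by move=> u [/HO].
Qed.

Lemma sigma_uc : unif_cont_2 sigma i.
Proof.
move=> E [U [O [hO O1 OU]] hE].
have [N [H [psi [tH sH p ->]]] hN] := hO _ O1.
pose EH := [set gh : F * F | H (gh.1^-1 * gh.2) /\ H (gh.2 * gh.1^-1)].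
have hEH : two_sided_unif tau EH.
  by exists H; [exact: open_nbhd tH (subgroup_open1 sH) | move=> gh].
have e1 : entourage [set xy : X * X | EH (i xy.1, i xy.2)].
  by case: htau => _ _ _ huc _; apply: huc.
have e2 : entourage (psi 1) by apply: Bent; apply: P1.
apply: filterS (filterI e1 e2) => -[x y] [[/= h1 h2] h3].
apply: hE => /=; split; apply: OU; rewrite -[_ * _]mul1g; apply: hN; split=> //.
- by apply: gen_incl; apply: Vpsi_j2.
- apply: gen_incl; apply: Vpsi_j2s; apply: Bsym => //; exact: P1.
Qed.

Lemma sigma_bal : bal -> balanced sigma.
Proof.
move=> hb; apply: topN_bal; [exact: Nsub | move=> N].
case=> H [psi [tH sH p ->]].
have hbt : balanced tau by case: htau => _ _ h _ _; apply: h.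
pose EH := [set gh : F * F | H (gh.2 * gh.1^-1)].
have : right_unif tau EH.
  by exists H; [exact: open_nbhd tH (subgroup_open1 sH) | move=> gh].
rewrite -hbt => -[W hW hWE].
have [H' [tH' sH' H'W]] := na_sub tau_na hW.
exists (H' `&` gen_subgroup (Vpsi i psi)); first by exists H', psi; split.
move=> g u [h1 h2]; split.
  have : EH (g^-1, g^-1 * u) by apply: hWE; rewrite /= invgK mulVKg; exact: H'W.
  by rewrite /EH /= invgK.
have := @Vpsi_conj psi psi g^-1; rewrite invgK; apply=> // w.
by rewrite (P5 hb p).
Qed.

Lemma main_open psi : Pf psi -> nbhd_of tau 1 (gen_subgroup (Vpsi i psi)).
Proof.
move=> hpsi.
have htg : top_group sigma by apply: topN_group; [exact: Nsub|exact: Nne|exact: NI|exact: Nconj].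
have hna : non_arch sigma by apply: topN_na; exact: Nsub.
have hh : hausdorff sigma.
  move=> x y /(proj2 (proj1 (match htau with And5 a _ _ _ _ => conj a I end))) [U [V [tU tV Ux Vy UV]]].
  by exists U, V; split=> //; apply: tau_sub_sigma.
have hb : bal -> balanced sigma by exact: sigma_bal.
case: htau => _ _ _ _ huniv.
have [phi [hphi hcont hphi_i _]] := huniv F sigma htg hh hna hb i sigma_uc.
have hid := free_id hphi hphi_i.
have hN : Nf (setT `&` gen_subgroup (Vpsi i psi)).
  by exists setT, psi; split=> //; case: tau_top.
have := hcont _ (topN_N Nsub hN).
have -> : phi @^-1` (setT `&` gen_subgroup (Vpsi i psi)) = setT `&` gen_subgroup (Vpsi i psi).
  by apply/seteqP; split=> g /=; rewrite hid.
move=> ht; exists (setT `&` gen_subgroup (Vpsi i psi)); split=> //.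
by split=> //; exact: gen1.
Qed.

End MainOpen.
End Main.

Section Parts.
Variables (X : uniformType) (B : set (set (X * X))) (hB : equiv_base B)
  (F : groupType) (i : X -> F) (hF : is_free_group i).

Lemma ent_B (E : set (X * X)) : entourage E -> {e | B e & e `<=` E}.
Proof. by move=> hE; apply: cid2; case: hB => _ h _; apply: h. Qed.

Lemma sub_part1 (tau : set (set F)) : is_FNA i tau -> forall U, nbhd_of tau 1 U ->
  exists2 psi : F -> set (X * X), (forall w, B (psi w)) & gen_subgroup (Vpsi i psi) `<=` U.
Proof.
move=> htau U hU.
have htg : top_group tau by case: htau => -[].
have hna : non_arch tau by case: htau.
have [H [tH sH HU]] := na_sub hna hU.
have hent : forall w, entourage [set xy : X * X |
    [set u | H (w * u * w^-1)] ((i xy.1)^-1 * i xy.2) /\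
    [set u | H (w * u * w^-1)] (i xy.2 * (i xy.1)^-1)].
  move=> w; case: htau => _ _ _ huc _.
  apply: (huc [set gh | [set u | H (w * u * w^-1)] (gh.1^-1 * gh.2) /\
                       [set u | H (w * u * w^-1)] (gh.2 * gh.1^-1)]).
  exists [set u | H (w * u * w^-1)] => //.
  exact: conj_nbhd w htg (open_nbhd tH (subgroup_open1 sH)).
pose psi w := proj1_sig (ent_B (hent w)).
exists psi; first by move=> w; case: (proj2_sig (ent_B (hent w))).
move=> g hg; apply: HU; apply: (gen_sub sH) hg => u [w [v [hv ->]]].
have [_ hs] := proj2_sig (ent_B (hent w)).
case: hv => [[x [y [hxy ->]]]|[x [y [hxy ->]]]].
- by have [] := hs _ hxy.
- have hyx : psi w (y, x) by apply: (Bsym hB) => //; case: (proj2_sig (ent_B (hent w))).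
  by have [] := hs _ hyx.
Qed.

Lemma sub_part2 (tau : set (set F)) : is_FNAb i tau -> forall U, nbhd_of tau 1 U ->
  exists2 e, B e & gen_subgroup (tilde i e) `<=` U.
Proof.
move=> htau U hU.
have htg : top_group tau by case: htau => -[].
have hna : non_arch tau by case: htau.
have hbt : balanced tau by case: htau => _ _ h _ _; apply: h.
have [H [tH sH HU]] := na_sub hna hU.
pose EH := [set gh : F * F | H (gh.2 * gh.1^-1)].
have : right_unif tau EH.
  by exists H; [exact: open_nbhd tH (subgroup_open1 sH) | move=> gh].
rewrite -hbt => -[W hW hWE].
have [H' [tH' sH' H'W]] := na_sub hna hW.
have hent : entourage [set xy : X * X | H' ((i xy.1)^-1 * i xy.2) /\ H' (i xy.2 * (i xy.1)^-1)].
  case: htau => _ _ _ huc _.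
  apply: (huc [set gh | H' (gh.1^-1 * gh.2) /\ H' (gh.2 * gh.1^-1)]).
  by exists H' => //; exact: open_nbhd tH' (subgroup_open1 sH').
have [e he hs] := ent_B hent.
exists e => // g hg; apply: HU; apply: (gen_sub sH) hg => u [w [v [hv ->]]].
have hv' : H' v.
  case: hv => [[x [y [hxy ->]]]|[x [y [hxy ->]]]].
  - by have [] := hs _ hxy.
  - have hyx : e (y, x) by apply: (Bsym hB).
    by have [] := hs _ hyx.
have : EH (w, w * v) by apply: hWE; rewrite /= mulKg; exact: H'W.
by rewrite /EH /=.
Qed.

Lemma tilde_sub e : B e -> is_subgroup (gen_subgroup (tilde i e)).
Proof. by move=> he; apply: (genV_sub hB). Qed.

Lemma tilde_normal e a u : gen_subgroup (tilde i e) u -> gen_subgroup (tilde i e) (a * u * a^-1).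
Proof. move=> hu; exact: (@Vpsi_conj X F i (fun _ => e) (fun _ => e) a (fun w z h => h) u hu). Qed.

Lemma qmap_eq e x y : B e -> e (x, y) -> qmap e x = qmap e y.
Proof.
move=> he hxy; apply: sig_eq => /=; rewrite /eclass; apply/seteqP; split=> z /= h.
- by case: hB => _ _ /(_ _ he) [_ hsy htr]; apply: htr (hsy _ _ hxy) h.
- by case: hB => _ _ /(_ _ he) [_ hsy htr]; apply: htr hxy h.
Qed.

Lemma ker_sub e (Fq : groupType) (iq : quot e -> Fq) (fbar : F -> Fq) :
  B e -> group_hom fbar -> (forall x, fbar (i x) = iq (qmap e x)) ->
  forall g, gen_subgroup (tilde i e) g -> fbar g = 1.
Proof.
move=> he hf hfi; apply: gen_ind; first exact: hom1.
move=> a b [w [v [hv ->]]] hb; rewrite hf hb mulg1 !hf (homV hf).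
suff -> : fbar v = 1 by rewrite mulg1 mulgV.
case: hv => [[x [y [hxy ->]]]|[x [y [hxy ->]]]].
- by rewrite hf (homV hf) !hfi (qmap_eq he hxy) mulVg.
- by rewrite hf (homV hf) !hfi (qmap_eq he hxy) mulgV.
Qed.

Lemma ker_sup e (Fq : groupType) (iq : quot e -> Fq) (fbar : F -> Fq) :
  B e -> is_free_group iq -> group_hom fbar -> (forall x, fbar (i x) = iq (qmap e x)) ->
  forall g, fbar g = 1 -> gen_subgroup (tilde i e) g.
Proof.
move=> he hq hf hfi.
have sec : forall q : quot e, {x | proj1_sig q = eclass e x}.
  by move=> q; apply: cid; exact: proj2_sig q.
pose s q := proj1_sig (sec q).
have hs : forall x, e (x, s (qmap e x)).
  move=> x; have := proj2_sig (sec (qmap e x)); rewrite /= => hx.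
  have : eclass e x x by rewrite /eclass /=; apply: (Brefl hB).
  by rewrite hx /eclass /= => h; apply: (Bsym hB).
have [Gm [hGm hGi _]] := hq F (fun q => i (s q)).
pose h w := Gm (fbar w).
have hh : group_hom h by move=> a b; rewrite /h hf hGm.
pose K := [set w | gen_subgroup (tilde i e) (w^-1 * h w)].
have hN := tilde_sub he.
have sK : is_subgroup K.
  split.
  - by rewrite /K /= (hom1 hh) invg1 mulg1; exact: gen1.
  - move=> a b ha hb; rewrite /K /= hh.
    have -> : (a * b)^-1 * (h a * h b) = (b^-1 * (a^-1 * h a) * b^-1^-1) * (b^-1 * h b).
      by rewrite invgK invgM !mulgA mulgK.
    case: hN => _ hM _; apply: hM => //; exact: tilde_normal.
  - move=> a ha; rewrite /K /= (homV hh) invgK.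
    have -> : a * (h a)^-1 = a * (a^-1 * h a)^-1 * a^-1.
      by rewrite invgM invgK mulgA mulgK.
    case: hN => _ _ hV; apply: tilde_normal; exact: hV.
have iK : forall x, K (i x).
  move=> x; rewrite /K /= /h hfi hGi; apply: gen_incl.
  exists 1, ((i x)^-1 * i (s (qmap e x))); split; last by rewrite invg1 mulg1 mul1g.
  by left; exists x, (s (qmap e x)).
move=> g hg; have := free_ind hF sK iK g; rewrite /K /= /h hg (hom1 hGm) mulg1.
by move/(genV (Vpsi_sym (psi := fun _ => e) hB (fun _ => he))); rewrite invgK.
Qed.

End Parts.

Unset Implicit Arguments.
Set Strict Implicit.
Theorem theorem4p13 (X : uniformType) (B : set (set (X * X)))
  (hB : equiv_base B)
  (F : groupType) (i : X -> F) (hF : is_free_group i) :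
  (* (1) *)
  (forall tau : set (set F), is_FNA i tau ->
     nbhd_base tau 1
       [set S | exists psi : F -> set (X * X),
                  (forall w, B (psi w)) /\ S = gen_subgroup (Vpsi i psi)]) /\
  (* (2)(a) *)
  (forall tau : set (set F), is_FNAb i tau ->
     nbhd_base tau 1
       [set S | exists2 e, B e & S = gen_subgroup (tilde i e)]) /\
  (* (2)(b) *)
  (forall (Fq : set (X * X) -> groupType)
          (iq : forall e, quot e -> Fq e)
          (fbar : forall e, F -> Fq e),
     (forall e, B e -> is_free_group (iq e)) ->
     (forall e, B e -> group_hom (fbar e) /\
                       forall x, fbar e (i x) = iq e (qmap e x)) ->
     forall tau : set (set F), is_FNAb i tau ->
       tau = gen_topology
               [set O | exists e, exists2 A : set (Fq e),
                          B e & O = fbar e @^-1` A]).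
Proof.
have B0 : {e | B e & e `<=` setT}.
  exact: (@ent_B X B hB setT entourageT).
have BI : forall e1 e2, B e1 -> B e2 -> {e | B e & e `<=` e1 `&` e2}.
  move=> e1 e2 h1 h2; apply: (@ent_B X B hB); apply: filterI; exact: (Bent hB).
have part2a : forall tau : set (set F), is_FNAb i tau ->
     nbhd_base tau 1 [set S | exists2 e, B e & S = gen_subgroup (tilde i e)].
  move=> tau htau; split.
  - move=> S [e he ->].
    apply: (main_open hB hF htau (Pf := [set psi | exists2 e, B e & psi = fun _ => e])).
    + by move=> psi [e' he' ->].
    + by exists (fun _ => e); exists e.
    + move=> psi1 psi2 [e1 h1 ->] [e2 h2 ->].
      have [e3 h3 h3'] := BI _ _ h1 h2.
      by exists (fun _ => e3); [exists e3 | move=> w].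
    + by move=> psi a hp; exists psi => // w; case: hp => e' _ ->.
    + by move=> _ psi [e' _ ->].
    + by exists e.
  - move=> U hU; have [e he hsub] := sub_part2 hB htau hU.
    by exists (gen_subgroup (tilde i e)) => //; exists e.
split; last split.
- move=> tau htau; split.
  + move=> S [psi [hpsi ->]].
    apply: (main_open hB hF htau (Pf := [set psi | forall w, B (psi w)])) => //.
    * by exists (fun _ => proj1_sig B0) => w /=; case: (proj2_sig B0).
    * move=> psi1 psi2 h1 h2.
      exists (fun w => proj1_sig (BI _ _ (h1 w) (h2 w))) => //.
        by move=> w; case: (proj2_sig (BI _ _ (h1 w) (h2 w))).
      by move=> w; case: (proj2_sig (BI _ _ (h1 w) (h2 w))).
    * move=> psi' a hp; exists (fun w => psi' (a * w)); [exact: (fun w => hp (a * w)) | by move=> w].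
  + move=> U hU; have [psi hpsi hsub] := sub_part1 hB htau hU.
    by exists (gen_subgroup (Vpsi i psi)) => //; exists psi.
- exact: part2a.
- move=> Fq iq fbar hq hfb tau htau.
  have htop : is_topology tau by case: htau => -[[]].
  have htg : top_group tau by case: htau => -[].
  have [hn1 hn2] := part2a tau htau.
  apply/seteqP; split => O hO.
  + move=> tau' htop' hS; apply: open_local => // g Og.
    have ho := transl g htg hO.
    have o1 : [set u | O (g * u)] 1 by rewrite /= mulg1.
    have [S [e he ->] hsub] := hn2 _ (open_nbhd ho o1).
    have [hf hfi] := hfb e he.
    exists (fbar e @^-1` [set fbar e g]); split=> //.
    * by apply: hS; exists e, [set fbar e g].
    * move=> u /= hu.
      have : fbar e (g^-1 * u) = 1 by rewrite hf (homV hf) hu mulVg.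
      move/(ker_sup hB hF he (hq e he) hf hfi)/hsub => /=.
      by rewrite mulVKg.
  + apply: hO => //.
    move=> _ [e [A he ->]].
    have [hf hfi] := hfb e he.
    apply: open_local => // g Ag.
    have [W [tW W1 WS]] := hn1 _ (ex_intro2 _ _ e he erefl).
    exists [set u | W (g^-1 * u)]; split.
    * exact: (transl g^-1 htg tW).
    * by rewrite /= mulVg.
    * move=> u /= /WS hu.
      have := ker_sub hB he hf hfi hu; rewrite hf (homV hf) => h1.
      have : fbar e u = fbar e g by apply: (@mulgI _ (fbar e g)^-1); rewrite h1 mulVg.
      by rewrite /= => ->.
Qed.
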